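(* Let $(X,\delta,\epsilon)$ be an $X$-self-adjoint internal commutative comonoid in a $\dagger$-compact category. Then: (i) the Frobenius identity $\delta\circ\delta^\dagger=(\delta^\dagger\otimes 1_X)\circ(1_X\otimes\delta)$ holds; (ii) $\delta$ is invariant under partial transpose: $(1_X\otimes\eta_X^\dagger\otimes 1_X)\circ(\sigma_{X,X}\otimes\delta)\circ(1_X\otimes\eta_X)=\delta$; (iii) $\delta_*=\delta$ (equivalently $\delta^*=\delta^\dagger$), where $\delta_*$ is regarded as a morphism $X\to X\otimes X$ via $X^*=X$ and $(X\otimes X)^*=X^*\otimes X^*=X\otimes X$.
   Context: A $\dagger$-compact category is a symmetric monoidal category $(\mathbf{C},\otimes,\mathrm{I})$, treated as strict (associators and unitors suppressed), with symmetry $\sigma_{A,B}:A\otimes B\to B\otimes A$, equipped with a contravariant functor $(-)^\dagger$ which is the identity on objects, involutive and monoidal (structural isomorphisms unitary), together with, for each object $A$, an object $A^*$ (with $A^{**}=A$) and a morphism $\eta_A:\mathrm{I}\to A^*\otimes A$ such that $\eta_{A^*}=\sigma_{A^*,A}\circ\eta_A$ and $(\eta_{A^*}^\dagger\otimes 1_A)\circ(1_A\otimes\eta_A)=1_A$. Duals of tensor products are the canonical ones: $(A\otimes B)^*=A^*\otimes B^*$ with $\eta_{A\otimes B}=(1_{A^*}\otimes\sigma_{A,B^*}\otimes 1_B)\circ(\eta_A\otimes\eta_B)$. For $f:A\to B$ define $f^*:B^*\to A^*$ by $f^*:=(1_{A^*}\otimes\eta_{B^*}^\dagger)\circ(1_{A^*}\otimes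 f\otimes 1_{B^*})\circ(\eta_A\otimes 1_{B^*})$, and the conjugate $f_*:=(f^\dagger)^*:A^*\to B^*$. An internal commutative comonoid is $(X,\delta,\epsilon)$ with $\delta:X\to X\otimes X$, $\epsilon:X\to\mathrm{I}$ satisfying $(\delta\otimes 1_X)\circ\delta=(1_X\otimes\delta)\circ\delta$, $(\epsilon\otimes 1_X)\circ\delta=1_X=(1_X\otimes\epsilon)\circ\delta$ and $\sigma_{X,X}\circ\delta=\delta$. It is called $X$-self-adjoint if the dual of $X$ in the $\dagger$-compact structure is $X^*=X$ with $\eta_X=\delta\circ\epsilon^\dagger$, and $\delta=(1_X\otimes\delta^\dagger)\circ(\eta_X\otimes 1_X)$. *)

(* Defs.v *)
(* Object equalities A** = A and (A (x) B)* = A* (x) B* are kept as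
   literal (propositional) equalities, used through the cast morphism [eqhom]. *)

Set Implicit Arguments.
Unset Strict Implicit.
Unset Printing Implicit Defensive.

Record DagSMCData := MkDagSMCData {
  obj : Type;
  hom : obj -> obj -> Type;
  idm : forall A, hom A A;
  comp : forall A B C, hom B C -> hom A B -> hom A C;
  tens : obj -> obj -> obj;
  unit : obj;
  tensm : forall A B C D, hom A B -> hom C D -> hom (tens A C) (tens B D);
  assoc : forall A B C, hom (tens (tens A B) C) (tens A (tens B C));
  assoc_inv : forall A B C, hom (tens A (tens B C)) (tens (tens A B) C);
  lunit : forall A, hom (tens unit A) A;
  lunit_inv : forall A, hom A (tens unit A);
  runit : forall A, hom (tens A unit) A;
  runit_inv : forall A, hom A (tens A unit);
  sym : forall A B, hom (tens A B) (tens B A);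
  dagger : forall A B, hom A B -> hom B A
}.

Arguments idm {_} A.
Arguments comp {_ _ _ _} g f.
Arguments tens {_} A B.
Arguments unit {_}.
Arguments tensm {_ _ _ _ _} f g.
Arguments assoc {_} _ _ _.
Arguments assoc_inv {_} _ _ _.
Arguments lunit {_} A.
Arguments lunit_inv {_} A.
Arguments runit {_} A.
Arguments runit_inv {_} A.
Arguments sym {_} A B.
Arguments dagger {_ _ _} f.

Declare Scope cat_scope.
Delimit Scope cat_scope with cat.
Open Scope cat_scope.
Notation "g ∘ f" := (comp g f) (at level 40, left associativity) : cat_scope.
Notation "f ⊗ g" := (tensm f g) (at level 35, right associativity) : cat_scope.

Definition eqhom (C : DagSMCData) (A B : obj C) (e : A = B) : hom A B :=
  match e in _ = Y return hom A Y with eq_refl => idm A end.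

Record isDagSMC (C : DagSMCData) : Prop := {
  comp_idl : forall (A B : obj C) (f : hom A B), idm B ∘ f = f;
  comp_idr : forall (A B : obj C) (f : hom A B), f ∘ idm A = f;
  comp_assoc : forall (A B C0 D : obj C) (h : hom C0 D) (g : hom B C0) (f : hom A B),
      h ∘ (g ∘ f) = (h ∘ g) ∘ f;
  tens_id : forall A B : obj C, idm A ⊗ idm B = idm (tens A B);
  tens_comp : forall (A1 B1 C1 A2 B2 C2 : obj C)
      (g1 : hom B1 C1) (f1 : hom A1 B1) (g2 : hom B2 C2) (f2 : hom A2 B2),
      (g1 ∘ f1) ⊗ (g2 ∘ f2) = (g1 ⊗ g2) ∘ (f1 ⊗ f2);
  assoc_invl : forall A B C0 : obj C, assoc_inv A B C0 ∘ assoc A B C0 = idm _;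
  assoc_invr : forall A B C0 : obj C, assoc A B C0 ∘ assoc_inv A B C0 = idm _;
  lunit_invl : forall A : obj C, lunit_inv A ∘ lunit A = idm _;
  lunit_invr : forall A : obj C, lunit A ∘ lunit_inv A = idm _;
  runit_invl : forall A : obj C, runit_inv A ∘ runit A = idm _;
  runit_invr : forall A : obj C, runit A ∘ runit_inv A = idm _;
  assoc_nat : forall (A1 A2 A3 B1 B2 B3 : obj C)
      (f : hom A1 B1) (g : hom A2 B2) (h : hom A3 B3),
      assoc B1 B2 B3 ∘ ((f ⊗ g) ⊗ h) = (f ⊗ (g ⊗ h)) ∘ assoc A1 A2 A3;
  lunit_nat : forall (A B : obj C) (f : hom A B),
      lunit B ∘ (idm unit ⊗ f) = f ∘ lunit A;
  runit_nat : forall (A B : obj C) (f : hom A B),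
      runit B ∘ (f ⊗ idm unit) = f ∘ runit A;
  pentagon : forall A B C0 D : obj C,
      (idm A ⊗ assoc B C0 D) ∘ assoc A (tens B C0) D ∘ (assoc A B C0 ⊗ idm D)
      = assoc A B (tens C0 D) ∘ assoc (tens A B) C0 D;
  triangle : forall A B : obj C,
      (idm A ⊗ lunit B) ∘ assoc A unit B = runit A ⊗ idm B;
  sym_nat : forall (A1 A2 B1 B2 : obj C) (f : hom A1 B1) (g : hom A2 B2),
      sym B1 B2 ∘ (f ⊗ g) = (g ⊗ f) ∘ sym A1 A2;
  sym_invol : forall A B : obj C, sym B A ∘ sym A B = idm _;
  hexagon : forall A B C0 : obj C,
      assoc B C0 A ∘ sym A (tens B C0) ∘ assoc A B C0
      = (idm B ⊗ sym A C0) ∘ assoc B A C0 ∘ (sym A B ⊗ idm C0);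
  dagger_id : forall A : obj C, dagger (idm A) = idm A;
  dagger_comp : forall (A B C0 : obj C) (g : hom B C0) (f : hom A B),
      dagger (g ∘ f) = dagger f ∘ dagger g;
  dagger_invol : forall (A B : obj C) (f : hom A B), dagger (dagger f) = f;
  dagger_tens : forall (A1 A2 B1 B2 : obj C) (f : hom A1 B1) (g : hom A2 B2),
      dagger (f ⊗ g) = dagger f ⊗ dagger g;
  dagger_assoc : forall A B C0 : obj C, dagger (assoc A B C0) = assoc_inv A B C0;
  dagger_lunit : forall A : obj C, dagger (lunit A) = lunit_inv A;
  dagger_runit : forall A : obj C, dagger (runit A) = runit_inv A;
  dagger_sym : forall A B : obj C, dagger (sym A B) = sym B A
}.

Record CompactData (C : DagSMCData) := MkCompactData {
  dual : obj C -> obj C;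
  dual_invol : forall A, dual (dual A) = A;
  dual_tens : forall A B, dual (tens A B) = tens (dual A) (dual B);
  eta : forall A, hom unit (tens (dual A) A)
}.

Arguments dual {_} _ _.
Arguments dual_invol {_} _ _.
Arguments dual_tens {_} _ _ _.
Arguments eta {_} _ _.

Section Compact.
Variables (C : DagSMCData) (K : CompactData C).

Definition eta_dual (A : obj C) : hom unit (tens A (dual K A)) :=
  eqhom (f_equal (fun Y => tens Y (dual K A)) (dual_invol K A)) ∘ eta K (dual K A).

Record isDagCompact : Prop := {
  eta_dual_sym : forall A, eta_dual A = sym (dual K A) A ∘ eta K A;
  yanking : forall A,
      lunit A ∘ (dagger (eta_dual A) ⊗ idm A) ∘ assoc_inv A (dual K A) A
        ∘ (idm A ⊗ eta K A) ∘ runit_inv A = idm A;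
  eta_tens : forall A B,
      eqhom (f_equal (fun Y => tens Y (tens A B)) (dual_tens K A B)) ∘ eta K (tens A B)
      = assoc_inv (dual K A) (dual K B) (tens A B)
        ∘ (idm (dual K A) ⊗ assoc (dual K B) A B)
        ∘ (idm (dual K A) ⊗ (sym A (dual K B) ⊗ idm B))
        ∘ (idm (dual K A) ⊗ assoc_inv A (dual K B) B)
        ∘ assoc (dual K A) A (tens (dual K B) B)
        ∘ (eta K A ⊗ eta K B) ∘ lunit_inv unit
}.

Definition transp (A B : obj C) (f : hom A B) : hom (dual K B) (dual K A) :=
  runit (dual K A) ∘ (idm (dual K A) ⊗ dagger (eta_dual B))
  ∘ (idm (dual K A) ⊗ (f ⊗ idm (dual K B)))
  ∘ assoc (dual K A) A (dual K B)
  ∘ (eta K A ⊗ idm (dual K B)) ∘ lunit_inv (dual K B).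

Definition conjm (A B : obj C) (f : hom A B) : hom (dual K A) (dual K B) :=
  transp (dagger f).

Definition comm_comonoid (X : obj C) (d : hom X (tens X X)) (e : hom X unit) : Prop :=
  assoc X X X ∘ (d ⊗ idm X) ∘ d = (idm X ⊗ d) ∘ d /\
  lunit X ∘ (e ⊗ idm X) ∘ d = idm X /\
  runit X ∘ (idm X ⊗ e) ∘ d = idm X /\
  sym X X ∘ d = d.

Definition etaX (X : obj C) (eX : dual K X = X) : hom unit (tens X X) :=
  eqhom (f_equal (fun Y => tens Y X) eX) ∘ eta K X.

Definition self_adjoint (X : obj C) (eX : dual K X = X)
    (d : hom X (tens X X)) (e : hom X unit) : Prop :=
  etaX eX = d ∘ dagger e /\
  d = (idm X ⊗ dagger d) ∘ assoc X X X ∘ (etaX eX ⊗ idm X) ∘ lunit_inv X.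

End Compact.

Arguments eta_dual {_} K A.
Arguments transp {_} K {A B} f.
Arguments conjm {_} K {A B} f.
Arguments etaX {_} K {X} eX.

(* Main.v *)
Require Import Defs.
From Stdlib Require Import ProofIrrelevance.
From Corelib Require Import ssreflect.

Section Toolkit.
Context {C : DagSMCData} (HC : isDagSMC C).
Local Notation ca := (comp_assoc HC).
Local Notation cl := (comp_idl HC).
Local Notation cr := (comp_idr HC).

Lemma cx {A B C0 D : obj C} {h : hom C0 D} {g : hom B C0} {f : hom A B} {k} :
  g ∘ f = k -> h ∘ g ∘ f = h ∘ k.
Proof. intros E; rewrite -ca E; reflexivity. Qed.

Lemma cx3 {A B C0 D E : obj C} {h : hom D E} {g3 : hom C0 D} {g : hom B C0} {f : hom A B} {k} :
  g3 ∘ g ∘ f = k -> h ∘ g3 ∘ g ∘ f = h ∘ k.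
Proof. intros E'; rewrite -!ca -E' !ca; reflexivity. Qed.
Lemma cx4 {A B C0 D E F : obj C} {h : hom E F} {g4 : hom D E} {g3 : hom C0 D} {g : hom B C0} {f : hom A B} {k} :
  g4 ∘ g3 ∘ g ∘ f = k -> h ∘ g4 ∘ g3 ∘ g ∘ f = h ∘ k.
Proof. intros E'; rewrite -!ca -E' !ca; reflexivity. Qed.

Ltac nrm := rewrite ?ca.
Tactic Notation "rw" uconstr(E) := first [rewrite (cx4 E) | rewrite (cx3 E) | rewrite (cx E) | rewrite E ]; nrm.

Lemma tc {A1 B1 C1 A2 B2 C2 : obj C} (g1 : hom B1 C1) (f1 : hom A1 B1) (g2 : hom B2 C2) (f2 : hom A2 B2) :
  (g1 ⊗ g2) ∘ (f1 ⊗ f2) = (g1 ∘ f1) ⊗ (g2 ∘ f2).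
Proof. rewrite (tens_comp HC); reflexivity. Qed.

Lemma faith_l {A B : obj C} (f g : hom A B) : idm unit ⊗ f = idm unit ⊗ g -> f = g.
Proof.
  intro E.
  have Hf : f = lunit B ∘ (idm unit ⊗ f) ∘ lunit_inv A.
  { rewrite (lunit_nat HC) -ca (lunit_invr HC) cr. reflexivity. }
  rewrite Hf E (lunit_nat HC) -ca (lunit_invr HC) cr. reflexivity.
Qed.

Ltac simp := nrm; repeat progress (rewrite ?cl ?cr ?(tens_id HC)
  ?(assoc_invl HC) ?(assoc_invr HC) ?(cx (assoc_invl HC _ _ _)) ?(cx (assoc_invr HC _ _ _))
  ?(lunit_invl HC) ?(lunit_invr HC) ?(cx (lunit_invl HC _)) ?(cx (lunit_invr HC _))
  ?(runit_invl HC) ?(runit_invr HC) ?(cx (runit_invl HC _)) ?(cx (runit_invr HC _))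
  ?(sym_invol HC) ?(cx (sym_invol HC _ _)); nrm).

Lemma cancel_r {A B D : obj C} (f g : hom B D) (P : hom A B) (Q : hom B A) :
  P ∘ Q = idm B -> f ∘ P = g ∘ P -> f = g.
Proof.
  intros H E. rewrite -(cr f) -(cr g) -H !ca E. reflexivity.
Qed.

Lemma kelly (A B : obj C) : lunit (tens A B) ∘ assoc unit A B = lunit A ⊗ idm B.
Proof.
  apply faith_l.
  apply (cancel_r _ _ (assoc unit (tens unit A) B ∘ (assoc unit unit A ⊗ idm B))
     ((assoc_inv unit unit A ⊗ idm B) ∘ assoc_inv unit (tens unit A) B)).
  { nrm. rw (tc _ _ _ _). simp. reflexivity. }
  rewrite -{1}(cl (idm unit)) -tc. nrm.
  rw (pentagon HC _ _ _ _).
  rw (triangle HC _ _). rewrite -(tens_id HC A B) -(assoc_nat HC).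
  rewrite -(assoc_nat HC). rw (tc _ _ _ _). rewrite (triangle HC) cl. reflexivity.
Qed.
Ltac onL t := match goal with |- ?L = ?R => let H := fresh "HR" in let HH := fresh "HHR" in
  remember R as H eqn:HH; t; subst H end.
Ltac onR t := match goal with |- ?L = ?R => let H := fresh "HL" in let HH := fresh "HHL" in
  remember L as H eqn:HH; t; subst H end.

Lemma faith_r {A B : obj C} (f g : hom A B) : f ⊗ idm unit = g ⊗ idm unit -> f = g.
Proof.
  intro E.
  have Hf : f = runit B ∘ (f ⊗ idm unit) ∘ runit_inv A.
  { rewrite (runit_nat HC) -ca (runit_invr HC) cr. reflexivity. }
  rewrite Hf E (runit_nat HC) -ca (runit_invr HC) cr. reflexivity.
Qed.

Lemma cancel_l {A B D : obj C} (f g : hom A B) (P : hom B D) (Q : hom D B) :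
  Q ∘ P = idm B -> P ∘ f = P ∘ g -> f = g.
Proof.
  intros H E. rewrite -(cl f) -(cl g) -H -!ca E. reflexivity.
Qed.

Lemma lunit_sym (A : obj C) : lunit A ∘ sym A unit = runit A.
Proof.
  symmetry. apply faith_r.
  apply (cancel_l _ _ (sym A unit) (sym unit A)). { apply (sym_invol HC). }
  onL ltac:(rewrite -(triangle HC); nrm; rw (sym_nat HC _ _); rewrite -(kelly unit A); nrm; rw (hexagon HC _ _ _); rw (lunit_nat HC _); rw (kelly _ _); rw (tc _ _ _ _); rewrite cl).
  reflexivity.
Qed.

Lemma lunit_inv_sym (A : obj C) : sym A unit ∘ runit_inv A = lunit_inv A.
Proof.
  apply (cancel_l _ _ (lunit A) (lunit_inv A)). { apply (lunit_invl HC). }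
  nrm. rewrite lunit_sym. simp. reflexivity.
Qed.

Lemma hexL (A B C0 : obj C) : sym A (tens B C0) ∘ assoc A B C0 =
  assoc_inv B C0 A ∘ (idm B ⊗ sym A C0) ∘ assoc B A C0 ∘ (sym A B ⊗ idm C0).
Proof.
  apply (cancel_l _ _ (assoc B C0 A) (assoc_inv B C0 A)). { apply (assoc_invl HC). }
  nrm. rewrite (hexagon HC). simp. reflexivity.
Qed.

Lemma hexR (A B C0 : obj C) : assoc B A C0 ∘ sym C0 (tens B A) =
  (idm B ⊗ sym C0 A) ∘ assoc B C0 A ∘ (sym C0 B ⊗ idm A) ∘ assoc_inv C0 B A.
Proof.
  apply (cancel_r _ _ (assoc C0 B A) (assoc_inv C0 B A)). { apply (assoc_invr HC). }
  nrm. rewrite (hexagon HC). simp. reflexivity.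
Qed.

Lemma hexH (A B C0 : obj C) :
  sym A (tens B C0) ∘ assoc A B C0 ∘ sym C0 (tens A B) =
  (sym C0 B ⊗ idm A) ∘ assoc_inv C0 B A ∘ (idm C0 ⊗ sym A B).
Proof.
  rewrite hexL. rw (eq_sym (sym_nat HC (idm C0) (sym A B))).
  rw (hexR _ _ _). rw (tc _ _ _ _). simp. reflexivity.
Qed.

Lemma mirror (A B C0 : obj C) (h : hom unit (tens A B)) (g : hom (tens B C0) unit) :
  runit A ∘ (idm A ⊗ g) ∘ assoc A B C0 ∘ (h ⊗ idm C0) ∘ lunit_inv C0
  = lunit A ∘ ((g ∘ sym C0 B) ⊗ idm A) ∘ assoc_inv C0 B A ∘ (idm C0 ⊗ (sym A B ∘ h)) ∘ runit_inv C0.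
Proof.
  rewrite -lunit_sym -lunit_inv_sym. nrm.
  rw (sym_nat HC _ _). rw (eq_sym (sym_nat HC (idm C0) h)).
  rw (hexH _ _ _). rw (tc _ _ _ _). rw (tc _ _ _ _). simp. reflexivity.
Qed.

Lemma tl {A B D : obj C} (E : obj C) (g : hom B D) (f : hom A B) :
  (g ∘ f) ⊗ idm E = (g ⊗ idm E) ∘ (f ⊗ idm E).
Proof. rewrite -(tens_comp HC) cl. reflexivity. Qed.
Lemma tr {A B D : obj C} (E : obj C) (g : hom B D) (f : hom A B) :
  idm E ⊗ (g ∘ f) = (idm E ⊗ g) ∘ (idm E ⊗ f).
Proof. rewrite -(tens_comp HC) cl. reflexivity. Qed.
Lemma sp1 {A B A' B' : obj C} (f : hom A B) (g : hom A' B') :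
  f ⊗ g = (idm B ⊗ g) ∘ (f ⊗ idm A').
Proof. rewrite -(tens_comp HC) cl cr. reflexivity. Qed.
Lemma sp2 {A B A' B' : obj C} (f : hom A B) (g : hom A' B') :
  f ⊗ g = (f ⊗ idm B') ∘ (idm A ⊗ g).
Proof. rewrite -(tens_comp HC) cl cr. reflexivity. Qed.
Lemma lunit_inv_nat {A B : obj C} (f : hom A B) :
  lunit_inv B ∘ f = (idm unit ⊗ f) ∘ lunit_inv A.
Proof.
  apply (cancel_l _ _ (lunit B) (lunit_inv B)). { apply (lunit_invl HC). }
  nrm. rewrite (lunit_nat HC). simp. reflexivity.
Qed.
Lemma ainv_nat {A1 A2 A3 B1 B2 B3 : obj C} (f : hom A1 B1) (g : hom A2 B2) (h : hom A3 B3) :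
  assoc_inv B1 B2 B3 ∘ (f ⊗ (g ⊗ h)) = ((f ⊗ g) ⊗ h) ∘ assoc_inv A1 A2 A3.
Proof.
  apply (cancel_l _ _ (assoc B1 B2 B3) (assoc_inv B1 B2 B3)). { apply (assoc_invl HC). }
  nrm. rewrite (assoc_nat HC). simp. reflexivity.
Qed.
Lemma kelly_inv (A B : obj C) : (lunit A ⊗ idm B) ∘ assoc_inv unit A B = lunit (tens A B).
Proof. rewrite -kelly. simp. reflexivity. Qed.

Lemma lr_unit : lunit (unit (d:=C)) = runit unit.
Proof.
  apply faith_r. rewrite -(triangle HC) -kelly.
  have E : lunit (tens (unit (d:=C)) unit) = idm unit ⊗ lunit unit.
  { apply (cancel_l _ _ (lunit unit) (lunit_inv unit)). { apply (lunit_invl HC). }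
    rewrite (lunit_nat HC). reflexivity. }
  rewrite E. reflexivity.
Qed.

Lemma rkelly (A B : obj C) : (idm A ⊗ runit B) ∘ assoc A B unit = runit (tens A B).
Proof.
  apply faith_r.
  apply (cancel_l _ _ (assoc A B unit) (assoc_inv A B unit)). { apply (assoc_invl HC). }
  onR ltac:(rewrite -(triangle HC); nrm; rewrite -(tens_id HC A B); rw (assoc_nat HC _ _ _);
    rw (eq_sym (pentagon HC _ _ _ _)); rw (tc _ _ _ _); rewrite cl (triangle HC);
    rw (eq_sym (assoc_nat HC _ _ _)); rw (tc _ _ _ _); rewrite cl).
  reflexivity.
Qed.
Lemma rkelly' (A B : obj C) : assoc A B unit = (idm A ⊗ runit_inv B) ∘ runit (tens A B).
Proof.
  rewrite -rkelly. nrm. rw (tc _ _ _ _). simp. reflexivity.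
Qed.

Lemma pent_inv (A B C0 D : obj C) :
  (assoc_inv A B C0 ⊗ idm D) ∘ assoc_inv A (tens B C0) D ∘ (idm A ⊗ assoc_inv B C0 D)
  = assoc_inv (tens A B) C0 D ∘ assoc_inv A B (tens C0 D).
Proof.
  have := f_equal dagger (pentagon HC A B C0 D).
  rewrite !(dagger_comp HC) !(dagger_tens HC) !(dagger_id HC) !(dagger_assoc HC).
  nrm. auto.
Qed.

Lemma hexA (A B C0 : obj C) : assoc B A C0 ∘ (sym A B ⊗ idm C0) =
  (idm B ⊗ sym C0 A) ∘ assoc B C0 A ∘ sym A (tens B C0) ∘ assoc A B C0.
Proof.
  apply (cancel_l _ _ (idm B ⊗ sym A C0) (idm B ⊗ sym C0 A)).
  { rewrite tc cl (sym_invol HC) (tens_id HC). reflexivity. }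
  nrm. rewrite -(hexagon HC). rw (tc _ _ _ _). simp. reflexivity.
Qed.

Section Core.
Context (X : obj C) (d : hom X (tens X X)) (e : hom X unit) (et etD : hom unit (tens X X)).
Hypothesis Hca : assoc X X X ∘ (d ⊗ idm X) ∘ d = (idm X ⊗ d) ∘ d.
Hypothesis Hcs : sym X X ∘ d = d.
Hypothesis H1 : etD = sym X X ∘ et.
Hypothesis H2 : lunit X ∘ dagger etD ⊗ idm X ∘ assoc_inv X X X ∘ idm X ⊗ et ∘ runit_inv X = idm X.
Hypothesis Hs1 : et = d ∘ dagger e.
Hypothesis Hs2 : d = idm X ⊗ dagger d ∘ assoc X X X ∘ et ⊗ idm X ∘ lunit_inv X.

Lemma F1 : etD = et.
Proof. rewrite H1 Hs1. nrm. rewrite Hcs. reflexivity. Qed.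
Lemma Fsym : sym X X ∘ et = et.
Proof. rewrite -H1. apply F1. Qed.
Lemma Fsymd : dagger et ∘ sym X X = dagger et.
Proof. rewrite -(dagger_sym HC) -(dagger_comp HC) Fsym. reflexivity. Qed.
Lemma F3 : dagger d = lunit X ∘ (dagger et ⊗ idm X) ∘ assoc_inv X X X ∘ (idm X ⊗ d).
Proof.
  rewrite {1}Hs2.
  rewrite !(dagger_comp HC) !(dagger_tens HC) !(dagger_id HC) (dagger_assoc HC) (dagger_invol HC).
  rewrite -(dagger_lunit HC) (dagger_invol HC). nrm. reflexivity.
Qed.
Lemma F5 : dagger d ∘ sym X X = dagger d.
Proof. rewrite -(dagger_sym HC) -(dagger_comp HC) Hcs. reflexivity. Qed.
Lemma Fco : (d ⊗ idm X) ∘ d = assoc_inv X X X ∘ (idm X ⊗ d) ∘ d.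
Proof. rewrite -ca -Hca. simp. reflexivity. Qed.
Lemma Fyank : lunit X ∘ dagger et ⊗ idm X ∘ assoc_inv X X X ∘ idm X ⊗ et ∘ runit_inv X = idm X.
Proof. have := H2. rewrite F1. auto. Qed.
Lemma Fmirror : runit X ∘ (idm X ⊗ dagger et) ∘ assoc X X X ∘ (et ⊗ idm X) ∘ lunit_inv X = idm X.
Proof. rewrite mirror Fsymd Fsym. exact Fyank. Qed.

Lemma part1 : d ∘ dagger d = (dagger d ⊗ idm X) ∘ assoc_inv X X X ∘ (idm X ⊗ d).
Proof.
  rewrite !F3. nrm.
  onR ltac:(rewrite !tl; nrm; rw (eq_sym (ainv_nat _ _ _)); rw (tc _ _ _ _); rewrite cl Fco;
    rewrite !tr; nrm; rw (pent_inv _ _ _ _); rw (ainv_nat _ _ _); rewrite (tens_id HC);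
    rw (eq_sym (ainv_nat _ _ _)); rewrite (tens_id HC); rw (tc _ _ _ _); rewrite cl cr;
    rewrite (sp1 (dagger et) d); nrm; rw (kelly_inv _ _); rw (lunit_nat HC _)).
  reflexivity.
Qed.
Lemma Pd : (idm X ⊗ dagger d) ∘ assoc X X X ∘ (sym X X ⊗ idm X) ∘ assoc_inv X X X
   ∘ (idm X ⊗ et) ∘ runit_inv X = d.
Proof.
  rw (hexA _ _ _). simp. rw (sym_nat HC _ _). rw (lunit_inv_sym _). rw (tc _ _ _ _).
  rewrite cl F5. symmetry. exact Hs2.
Qed.

Lemma part2 : (idm X ⊗ lunit X) ∘ (idm X ⊗ (dagger et ⊗ idm X))
    ∘ (idm X ⊗ assoc_inv X X X) ∘ assoc X X (tens X X)
    ∘ (sym X X ⊗ d) ∘ assoc_inv X X X ∘ (idm X ⊗ et) ∘ runit_inv X = d.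
Proof.
  rewrite (sp1 (sym X X) d) -(tens_id HC X X). nrm. rw (assoc_nat HC _ _ _).
  rw (tc _ _ _ _). rw (tc _ _ _ _). rw (tc _ _ _ _). rewrite !cl -F3. exact Pd.
Qed.
Lemma keyb (etT : hom unit (tens (tens X X) (tens X X)))
  (H3 : etT = assoc_inv X X (tens X X) ∘ idm X ⊗ assoc X X X ∘ idm X ⊗ sym X X ⊗ idm X
    ∘ idm X ⊗ assoc_inv X X X ∘ assoc X X (tens X X) ∘ et ⊗ et ∘ lunit_inv unit) :
  (idm (tens X X) ⊗ dagger d) ∘ etT = (d ⊗ idm X) ∘ et.
Proof.
  rewrite H3. nrm. rewrite -(tens_id HC X X). rw (eq_sym (ainv_nat _ _ _)).
  rw (tc _ _ _ _). rw (tc _ _ _ _). rw (tc _ _ _ _). rewrite !cl.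
  rewrite (sp1 et et) -(tens_id HC X X). nrm. rw (assoc_nat HC _ _ _).
  rw (tc _ _ _ _). rewrite cl rkelly'. nrm. rw (tc _ _ _ _). rewrite cl.
  rewrite Pd. rw (runit_nat HC _). rewrite -lr_unit. simp.
  rewrite Hs1. nrm. rewrite Fco. reflexivity.
Qed.

Lemma part3 (etT : hom unit (tens (tens X X) (tens X X)))
  (H3 : etT = assoc_inv X X (tens X X) ∘ idm X ⊗ assoc X X X ∘ idm X ⊗ sym X X ⊗ idm X
    ∘ idm X ⊗ assoc_inv X X X ∘ assoc X X (tens X X) ∘ et ⊗ et ∘ lunit_inv unit) :
  runit (tens X X) ∘ (idm (tens X X) ⊗ dagger et) ∘ (idm (tens X X) ⊗ (dagger d ⊗ idm X))
   ∘ assoc (tens X X) (tens X X) X ∘ (etT ⊗ idm X) ∘ lunit_inv X = d.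
Proof.
  rw (eq_sym (assoc_nat HC _ _ _)). rw (tc _ _ _ _). rewrite cl (keyb _ H3).
  rewrite tl. nrm. rw (assoc_nat HC _ _ _). rewrite (tens_id HC). rw (tc _ _ _ _).
  rewrite cl cr (sp2 d (dagger et)). nrm. rw (runit_nat HC _).
  have E := f_equal (fun k => d ∘ k) Fmirror. cbn in E. rewrite cr !ca in E. exact E.
Qed.
End Core.
End Toolkit.

Theorem mainTheorem3 (C : DagSMCData) (HC : isDagSMC C)
    (K : CompactData C) (HK : isDagCompact K)
    (X : obj C) (d : hom X (tens X X)) (e : hom X unit)
    (eX : dual K X = X)
    (Hcom : comm_comonoid d e) (Hsa : self_adjoint eX d e) :
  (* (i) Frobenius identity *)
  d ∘ dagger d = (dagger d ⊗ idm X) ∘ assoc_inv X X X ∘ (idm X ⊗ d)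
  /\
  (* (ii) invariance under partial transpose *)
  (idm X ⊗ lunit X) ∘ (idm X ⊗ (dagger (etaX K eX) ⊗ idm X))
    ∘ (idm X ⊗ assoc_inv X X X) ∘ assoc X X (tens X X)
    ∘ (sym X X ⊗ d) ∘ assoc_inv X X X ∘ (idm X ⊗ etaX K eX) ∘ runit_inv X
  = d
  /\
  (* (iii) d_* = d, read as X -> X (x) X via X* = X, (X (x) X)* = X* (x) X* = X (x) X *)
  eqhom (f_equal2 tens eX eX) ∘ eqhom (dual_tens K X X) ∘ conjm K d ∘ eqhom (eq_sym eX)
  = d.
Proof.
  pose proof (eta_dual_sym HK X) as H1.
  pose proof (yanking HK X) as H2.
  pose proof (eta_tens HK X X) as H3.
  unfold self_adjoint, etaX in Hsa.
  unfold etaX, conjm, transp, eta_dual in *.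
  clear HK.
  revert H1 H2 H3 Hsa.
  generalize (eta K (tens X X)) (eta K (dual K X)) (eta K X).
  generalize (dual_tens K X X) (dual_invol K X).
  generalize (dual K (tens X X)) (dual K (dual K X)).
  intros DT DD eT eI etT etD et.
  subst DT DD.
  revert et etD etT eX.
  generalize (dual K X).
  intros D et etD etT eX. subst D.
  cbn.
  intros H1 H2 H3 Hsa.
  destruct Hcom as [Hca [_ [_ Hcs]]]. destruct Hsa as [Hs1 Hs2].
  rewrite ?(comp_idl HC) in H1 H2 H3 Hs1 Hs2 |- *.
  assert (F : etD = et) by (eapply F1; eassumption).
  rewrite F.
  split; [|split].
  - eapply part1; eassumption.
  - eapply part2; eassumption.
  - rewrite (proof_irrelevance _ (f_equal2 tens (eq_refl X) (eq_refl X)) eq_refl). cbn. rewrite (comp_idl HC) (comp_idr HC) (comp_idl HC).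
    eapply part3; eassumption.
Qed.
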